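(* Let $u,v\in\mathbb{N}$. Let $M$ be a finite $u\times v$ matrix which is image partition regular over $\mathbb{N}$, and let $N$ be an infinite ($\omega\times\omega$) matrix which is image partition regular near $0$ over a dense subsemigroup $S$ of $((0,\infty),+)$. Then the block matrix \[\begin{pmatrix} M & O\\ O & N\end{pmatrix}\] (where the $O$ denote zero matrices of the appropriate sizes) is image partition regular near $0$ over $S$.
   Context: Matrices have rational entries, and each row of an infinite matrix has only finitely many nonzero entries (so that $A\vec{x}$ is defined). A $u\times v$ matrix $A$ with $u,v\in\mathbb{N}$ is image partition regular over $\mathbb{N}$ if whenever $\mathbb{N}$ is partitioned into finitely many cells $\mathbb{N}=\bigcup_{i=1}^r C_i$, there exist $i$ and $\vec{x}\in\mathbb{N}^v$ such that all entries of $A\vec{x}$ lie in $C_i$. For $S$ a dense subsemigroup of $((0,\infty),+)$ and $A$ a $u\times v$ matrix with $u,v\in\mathbb{N}\cup\{\omega\}$, $A$ is image partition regular near $0$ over $S$ if whenever $S=\bigcup_{i=1}^r C_i$ is a finite partition and $\delta>0$, there exist $i\in\{1,\dots,r\}$ and $\vec{x}\in S^v$ such that all entries of $A\vec{x}$ lie in $C_i\cap(0,\delta)$. *)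

(* Defs.v *)
From HB Require Import structures.
From mathcomp Require Import all_boot all_order all_algebra.
From mathcomp Require Import all_classical all_reals all_analysis.
Set Implicit Arguments. Unset Strict Implicit. Unset Printing Implicit Defensive.
Import Order.TTheory GRing.Theory Num.Theory.
Local Open Scope classical_set_scope.
Local Open Scope ring_scope.

(* Finite matrices: 'M[rat]_(u, v).  Infinite (omega x omega) matrices:
   functions nat -> nat -> rat, row i column j. *)
Definition infmx := nat -> nat -> rat.

Definition row_finite (A : infmx) : Prop :=
  forall i, exists n : nat, forall j : nat, (n <= j)%N -> A i j = 0.

(* "the i-th entry of A x lies in P": the entry is the (finite) sum
   \sum_j A i j * x j, computed over any initial segment containing the
   support of row i. *)
Definition entry_in {R : realType} (A : infmx) (x : nat -> R) (i : nat)
    (P : set R) : Prop :=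
  forall n : nat, (forall j : nat, (n <= j)%N -> A i j = 0) ->
    P (\sum_(j < n) ratr (A i j) * x j).

Definition dense_subsemigroup {R : realType} (S : set R) : Prop :=
  S `<=` [set x | 0 < x] /\
  (forall s t, S s -> S t -> S (s + t)) /\
  [set x | 0 < x] `<=` closure (S : set R^o).

Definition IPR_N (u v : nat) (M : 'M[rat]_(u, v)) : Prop :=
  forall (r : nat) (C : nat -> set nat),
    (forall i, C i `<=` [set n | (0 < n)%N]) ->
    (forall i k, (i < r)%N -> (k < r)%N -> i <> k -> C i `&` C k = set0) ->
    (forall n, (0 < n)%N -> exists2 i, (i < r)%N & C i n) ->
    exists2 i, (i < r)%N &
      exists x : 'I_v -> nat, (forall j, (0 < x j)%N) /\
        forall k : 'I_u, exists2 n : nat, C i n &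
          \sum_(j < v) M k j * (x j)%:R = n%:R.

Definition IPR_near0 {R : realType} (S : set R) (A : infmx) : Prop :=
  forall (r : nat) (C : nat -> set R) (delta : R),
    (forall i, C i `<=` S) ->
    (forall i k, (i < r)%N -> (k < r)%N -> i <> k -> C i `&` C k = set0) ->
    (forall s, S s -> exists2 i, (i < r)%N & C i s) ->
    0 < delta ->
    exists2 i, (i < r)%N &
      exists x : nat -> R, (forall j, S (x j)) /\
        forall k : nat, entry_in A x k (C i `&` [set y | 0 < y < delta]).

(* The block matrix  ( M O ; O N )  viewed as an omega x omega matrix:
   rows 0..u-1 / columns 0..v-1 are those of M, row u+i / column v+j is
   row i / column j of N. *)
Definition block_mx_inf (u v : nat) (M : 'M[rat]_(u, v)) (N : infmx) : infmx :=
  fun i j =>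
    if (i < u)%N then
      (if (j < v)%N then (match insub i, insub j with
                          | Some i', Some j' => M i' j'
                          | _, _ => 0 end) else 0)
    else (if (j < v)%N then 0 else N (i - u)%N (j - v)%N).

(* Main.v *)
Require Import Defs.
From mathcomp Require Import all_boot all_order all_algebra.
From mathcomp Require Import all_classical all_reals all_analysis.
From Stdlib Require Import Classical.
From mathcomp Require Import lra.
Set Implicit Arguments. Unset Strict Implicit. Unset Printing Implicit Defensive.
Import Order.TTheory GRing.Theory Num.Theory.
Local Open Scope classical_set_scope.
Local Open Scope ring_scope.

Definition goodK (u v : nat) (M : 'M[rat]_(u, v)) (r K : nat) (f : nat -> nat) : Prop :=
  exists2 i, (i < r)%N & exists x : 'I_v -> nat, (forall j, (0 < x j)%N) /\
    forall k : 'I_u, exists n : nat, [/\ (0 < n)%N, (n <= K)%N, f n = i &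
       \sum_(j < v) M k j * (x j)%:R = n%:R].

Definition okcol (r K : nat) (f : nat -> nat) :=
  forall n, (0 < n)%N -> (n <= K)%N -> (f n < r)%N.
Definition agree (n : nat) (f g : nat -> nat) :=
  forall m, (0 < m)%N -> (m <= n)%N -> f m = g m.

Lemma goodK_mono u v (M : 'M[rat]_(u, v)) r K K' f :
  (K <= K')%N -> goodK M r K f -> goodK M r K' f.
Proof.
move=> KK [i ir [x [xp H]]]; exists i => //; exists x; split => // k.
have [n [n0 nK fn e]] := H k; exists n; split => //; exact: leq_trans KK.
Qed.

Lemma goodK_agree u v (M : 'M[rat]_(u, v)) r K f g :
  agree K f g -> goodK M r K f -> goodK M r K g.
Proof.
move=> A [i ir [x [xp H]]]; exists i => //; exists x; split => // k.
have [n [n0 nK fn e]] := H k; exists n; split => //; by rewrite -A.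
Qed.

Definition Qp u v (M : 'M[rat]_(u, v)) r n g :=
  forall K, (n <= K)%N -> exists f, [/\ okcol r K f, ~ goodK M r K f & agree n f g].

Definition upd (g : nat -> nat) (p a : nat) := fun m => if m == p then a else g m.

Lemma step u v (M : 'M[rat]_(u, v)) r n g :
  Qp M r n g -> exists a, (a < r)%N /\ Qp M r n.+1 (upd g n.+1 a).
Proof.
move=> Q; apply: NNPP => Hn.
have H1 : forall a, exists K, (a < r)%N -> ((n.+1 <= K)%N /\
    forall f, ~ [/\ okcol r K f, ~ goodK M r K f & agree n.+1 f (upd g n.+1 a)]).
  move=> a; case: (ltnP a r) => ar; last by exists 0%N.
  have : ~ Qp M r n.+1 (upd g n.+1 a) by move=> q; apply: Hn; exists a.
  move=> /not_all_ex_not [K HK]; exists K => _.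
  case: (ltnP K n.+1) => KK; first by exfalso; apply: HK => le; move: KK; rewrite ltnNge le.
  split => // f Hf; apply: HK => _; by exists f.
have [Ka HKa] := boolp.choice H1.
pose Km := (\max_(a < r) Ka a + n.+1)%N.
have [f [okf nf af]] := Q Km (leq_trans (leqnSn n) (leq_addl _ _)).
have ar : (f n.+1 < r)%N by apply: okf => //; exact: leq_addl.
have [KK HK] := HKa _ ar.
have KaKm : (Ka (f n.+1) <= Km)%N.
  apply: leq_trans (leq_addr _ _).
  exact: (leq_bigmax (F := fun a : 'I_r => Ka a) (Ordinal ar)).
apply: (HK f); split.
- by move=> m m0 mK; apply: okf => //; exact: leq_trans KaKm.
- by move=> gd; apply: nf; exact: goodK_mono gd.
- move=> m m0 mn; rewrite /upd; case: eqP => [->//|/eqP mne].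
  by apply: af => //; rewrite -ltnS ltn_neqAle mne mn.
Qed.

Fixpoint iterG (F : nat -> (nat -> nat) -> nat) (n : nat) : nat -> nat :=
  match n with
  | 0 => fun _ => 0%N
  | n'.+1 => upd (iterG F n') n'.+1 (F n' (iterG F n'))
  end.

Lemma iterG_stable F n m : (m <= n)%N -> iterG F n m = iterG F m m.
Proof.
elim: n => [|n IH]; first by rewrite leqn0 => /eqP ->.
rewrite leq_eqVlt => /orP [/eqP ->//|mn].
by rewrite /= /upd (ltn_eqF mn) IH.
Qed.

Lemma compactness u v (M : 'M[rat]_(u, v)) r :
  (0 < r)%N -> IPR_N M -> exists K, forall f, okcol r K f -> goodK M r K f.
Proof.
move=> r0 ipr; apply: NNPP => nK.
have H0 : forall K, exists f, okcol r K f /\ ~ goodK M r K f.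
  move=> K; apply: NNPP => nf; apply: nK; exists K => f ok.
  by apply: NNPP => ng; apply: nf; exists f.
have HF : forall n g, exists a, Qp M r n g -> (a < r)%N /\ Qp M r n.+1 (upd g n.+1 a).
  move=> n g; case: (classic (Qp M r n g)) => q.
    by have [a ?] := step q; exists a.
  by exists 0%N.
pose F := fun n => projT1 (boolp.choice (HF n)).
have HFF : forall n g, Qp M r n g -> (F n g < r)%N /\ Qp M r n.+1 (upd g n.+1 (F n g)).
  by move=> n g; rewrite /F; case: (boolp.choice (HF n)) => /= ? H; apply: H.
have QG : forall n, Qp M r n (iterG F n).
  elim => [|n IH].
    move=> K _; have [f [ok ng]] := H0 K; exists f; split => // m m0 m00.
    by move: m0; rewrite leqNgt; move: m00; rewrite leqn0 => /eqP ->.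
  exact: (HFF _ _ IH).2.
pose h := fun m => iterG F m m.
have hok : forall m, (0 < m)%N -> (h m < r)%N.
  case => // m _; rewrite /h /= /upd eqxx; exact: (HFF _ _ (QG m)).1.
have hbad : forall K, ~ goodK M r K h.
  move=> K gd; have [f [okf nf af]] := QG K K (leqnn K).
  apply: nf; apply: goodK_agree gd => m m0 mK.
  by rewrite af // /h iterG_stable.
pose C := fun i => [set n : nat | (0 < n)%N /\ h n = i].
have c1 : forall i, C i `<=` [set n | (0 < n)%N] by move=> i n [].
have c2 : forall i k, (i < r)%N -> (k < r)%N -> i <> k -> C i `&` C k = set0.
  move=> i k _ _ ik; apply/seteqP; split => n // [[_ a] [_ b]]; exfalso; apply: ik.
  by rewrite -a -b.
have c3 : forall n, (0 < n)%N -> exists2 i, (i < r)%N & C i n.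
  by move=> n n0; exists (h n); [exact: hok | split].
have [i ir [x [xp Hx]]] := ipr r C c1 c2 c3.
have Hn : forall k : 'I_u, exists n, C i n /\ \sum_(j < v) M k j * (x j)%:R = n%:R.
  by move=> k; have [n ? ?] := Hx k; exists n.
have [nk Hnk] := boolp.choice Hn.
apply: (hbad (\max_(k < u) nk k)); exists i => //; exists x; split => // k.
have [[n0 hn] e] := Hnk k; exists (nk k); split => //.
exact: (leq_bigmax (F := nk)).
Qed.

Lemma sum_trunc (R : realType) (g : nat -> R) a b :
  (forall j, (a <= j)%N -> g j = 0) -> (a <= b)%N ->
  \sum_(j < b) g j = \sum_(j < a) g j.
Proof.
move=> H ab; rewrite -!(big_mkord xpredT) (@big_cat_nat _ _ _ a 0 b _ _ (leq0n a) ab) /=.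
rewrite [X in _ + X]big_nat_cond [X in _ + X]big1 ?addr0 // => j /andP[/andP[aj _] _].
exact: H.
Qed.

Lemma sum_eq2 (R : realType) (g : nat -> R) a b :
  (forall j, (a <= j)%N -> g j = 0) -> (forall j, (b <= j)%N -> g j = 0) ->
  \sum_(j < a) g j = \sum_(j < b) g j.
Proof.
move=> Ha Hb; case: (leqP a b) => ab; first by rewrite (sum_trunc Ha).
by rewrite (sum_trunc Hb) // ltnW.
Qed.

Lemma S_mul (R : realType) (S : set R) t n :
  dense_subsemigroup S -> S t -> (0 < n)%N -> S (n%:R * t).
Proof.
move=> [_ [Sadd _]] St; elim: n => // [[|n]] IH _; first by rewrite mul1r.
by rewrite -[n.+2]addn1 natrD mulrDl mul1r; apply: Sadd => //; apply: IH.
Qed.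

Lemma bnd (R : realType) (t delta : R) (K m : nat) :
  0 < t -> t < delta / K.+2%:R -> (m <= K.+1)%N -> m%:R * t < delta.
Proof.
move=> t0 td mK.
have h1 : t * K.+2%:R < delta by rewrite -ltr_pdivlMr // ltr0n.
have h2 : m%:R * t <= K.+1%:R * t by apply: ler_wpM2r; [exact: ltW | rewrite ler_nat].
have h3 : t * K.+2%:R = K.+1%:R * t + t by rewrite -[K.+2]addn1 natrD mulrDr mulr1 mulrC.
lra.
Qed.

Lemma blockE u v (M : 'M[rat]_(u, v)) N (i : 'I_u) (j : 'I_v) :
  block_mx_inf M N i j = M i j.
Proof. by rewrite /block_mx_inf !ltn_ord !valK. Qed.

Theorem theorem3p1 (R : realType) (S : set R) (u v : nat)
    (M : 'M[rat]_(u, v)) (N : infmx) :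
  dense_subsemigroup S ->
  IPR_N M ->
  row_finite N ->
  IPR_near0 S N ->
  IPR_near0 S (block_mx_inf M N).
Proof.
move=> dS ipr rfN iprN r C delta Csub Cdis Ccov d0.
have Spos : forall t, S t -> 0 < t by move=> t St; exact: (dS.1 t St).
case: r Cdis Ccov => [|r'] Cdis Ccov.
  by have [i] := iprN 0%N C delta Csub Cdis Ccov d0.
set r := r'.+1.
have Hc : forall t, exists c, S t -> (c < r)%N /\ C c t.
  move=> t; case: (classic (S t)) => St; last by exists 0%N.
  by have [c ? ?] := Ccov t St; exists c.
have [col Hcol] := boolp.choice Hc.
have colU : forall t i, (i < r)%N -> C i t -> col t = i.
  move=> t i ir Ct; have St := Csub _ _ Ct; have [cr Cc] := Hcol t St.
  apply: NNPP => ne; have := Cdis _ _ cr ir ne; move/seteqP => [+ _].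
  by move=> /(_ t (conj Cc Ct)).
have [K0 HK0] := compactness (ltn0Sn r') ipr.
have [K HK] : exists K, forall f, okcol r K.+1 f -> goodK M r K.+1 f.
  exists K0 => f ok; apply: (goodK_mono (leqnSn K0)); apply: HK0 => n n0 nK.
  by apply: ok => //; exact: leq_trans nK _.
pose pat := fun t : R => [ffun n : 'I_K.+1 => (inord (col (n.+1%:R * t)) : 'I_r)].
pose C' := fun p : nat => [set t : R | S t /\ (enum_rank (pat t) : nat) = p].
pose d' := delta / K.+2%:R.
have c1 : forall p, C' p `<=` S by move=> p t [].
have c2 : forall i k, (i < #|{: {ffun 'I_K.+1 -> 'I_r}}|)%N -> (k < #|{: {ffun 'I_K.+1 -> 'I_r}}|)%N -> i <> k -> C' i `&` C' k = set0.
  move=> i k _ _ ik; apply/seteqP; split => t // [[_ a] [_ b]]; exfalso; apply: ik.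
  by rewrite -a -b.
have c3 : forall s, S s -> exists2 p, (p < #|{: {ffun 'I_K.+1 -> 'I_r}}|)%N & C' p s.
  by move=> s Ss; exists (enum_rank (pat s)) => //; split.
have d'0 : 0 < d' by rewrite divr_gt0 // ltr0n.
have [p _ [y [Sy Hy]]] := iprN _ C' d' c1 c2 c3 d'0.
have [n0 Hn0] := rfN 0%N.
set t0 := \sum_(j < n0) ratr (N 0%N j) * y j.
have [[St0 pt0] /andP[t0p t0d]] := Hy 0%N n0 Hn0.
have colpat : forall t, C' p t -> forall m, (0 < m)%N -> (m <= K.+1)%N ->
    col (m%:R * t) = col (m%:R * t0).
  move=> t [St pt] m m0 mK.
  have E : pat t = pat t0 by apply: enum_rank_inj; apply: val_inj; rewrite /= pt pt0.
  have := congr1 (fun F : {ffun 'I_K.+1 -> 'I_r} => nat_of_ord (F (inord m.-1))) E.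
  rewrite /= !ffunE (@inordK K m.-1) ?prednK // ?(leq_ltn_trans _ mK) ?leq_pred //.
  rewrite !inordK //; [exact: (Hcol _ (S_mul dS St0 m0)).1 | exact: (Hcol _ (S_mul dS St m0)).1].
pose f := fun n => col (n%:R * t0).
have okf : okcol r K.+1 f by move=> n n0' _; exact: (Hcol _ (S_mul dS St0 n0')).1.
have [i ir [x [xp Hx]]] := HK f okf.
have [i' [m [[ir' m0 mK fm] [x' [xp' Hx']]]]] : exists i' m, [/\ (i' < r)%N, (0 < m)%N, (m <= K.+1)%N & f m = i'] /\
   exists x : 'I_v -> nat, (forall j, (0 < x j)%N) /\
    forall k : 'I_u, exists n : nat, [/\ (0 < n)%N, (n <= K.+1)%N, f n = i' &
       \sum_(j < v) M k j * (x j)%:R = n%:R].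
  case: (posnP u) => u0.
    exists (f 1%N), 1%N; split; first split => //; first exact: okf.
    exists x; split => // k; exfalso; have := ltn_ord k; by rewrite {2}u0.
  have [m [m0 mK fm _]] := Hx (Ordinal u0).
  by exists i, m; split => //; exists x.
clear i ir x xp Hx.
exists i' => //.
pose xn := fun j : nat => if insub j is Some j' then x' j' else 1%N.
have xnp : forall j, (0 < xn j)%N by move=> j; rewrite /xn; case: (insub j).
pose z := fun j : nat => if (j < v)%N then (xn j)%:R * t0 else m%:R * y (j - v)%N.
exists z; split.
  move=> j; rewrite /z; case: ifP => _; apply: S_mul => //.
move=> k n Hn.
set g := fun j => ratr (block_mx_inf M N k j) * z j.
case: (ltnP k u) => ku.
  have -> : \sum_(j < n) ratr (block_mx_inf M N k j) * z j = \sum_(j < v) g j.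
    apply: sum_eq2 => j jn; first by rewrite /g Hn // rmorph0 mul0r.
    by rewrite /g /block_mx_inf ku ltnNge jn rmorph0 mul0r.
  pose k' := Ordinal ku.
  have [nk [nk0 nkK fnk e]] := Hx' k'.
  have -> : \sum_(j < v) g j = nk%:R * t0.
    rewrite /g (_ : k = k') // (eq_bigr (fun j : 'I_v => ratr (M k' j * (x' j)%:R) * t0)); last first.
      move=> j _; rewrite blockE /z ltn_ord /xn valK rmorphM.
      by rewrite /= ratr_nat mulrA.
    rewrite -big_distrl /= -raddf_sum /= e ratr_nat //.
  split; last by apply/andP; split; [apply: mulr_gt0 => //; rewrite ltr0n | exact: bnd t0d nkK].
  have [_ Cc] := Hcol _ (S_mul dS St0 nk0).
  by rewrite -fnk.
pose n' := (n - v)%N.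
have Hn' : forall j, (n' <= j)%N -> N (k - u)%N j = 0.
  move=> j jn; have vj : (v + j < v)%N = false by rewrite ltnNge leq_addr.
  have := Hn (v + j)%N; rewrite /block_mx_inf ltnNge ku /= vj addKn.
  by apply; rewrite -leq_subLR.
have [[St pt] /andP[tp td]] := Hy (k - u)%N n' Hn'.
set t := \sum_(j < n') ratr (N (k - u)%N j) * y j in St pt tp td.
have nvn : (n <= v + n')%N by rewrite -leq_subLR.
rewrite -/(g _) -(sum_trunc (g := g) _ nvn); last by move=> j jn; rewrite /g Hn // rmorph0 mul0r.
rewrite big_split_ord /= big1 ?add0r; last first.
  by move=> j _; rewrite /g /block_mx_inf ltnNge ku /= ltn_ord rmorph0 mul0r.
have -> : \sum_(j < n') g (v + j)%N = m%:R * t.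
  rewrite /t mulr_sumr; apply: eq_bigr => j _.
  have vj : (v + j < v)%N = false by rewrite ltnNge leq_addr.
  rewrite /g /block_mx_inf /z ltnNge ku /= vj !addKn.
  by rewrite mulrCA.
split; last by apply/andP; split; [apply: mulr_gt0 => //; rewrite ltr0n | exact: bnd td mK].
have [_ Cc] := Hcol _ (S_mul dS St m0).
have fm' : col (m%:R * t0) = i' := fm.
by move: Cc; rewrite (colpat t (conj St pt)) // fm'.
Qed.
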